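(* Let $\Lambda\subseteq\mathbb Z^2$ be the lattice with generator matrix $$G=\begin{pmatrix} v_{11} & v_{12}\\ v_{21} & v_{22}\end{pmatrix}.$$ Assume $\Lambda$ induces a lattice tiling of the shape $\mathcal S\subset\mathbb Z^2$. Then the triple $(\Lambda,\mathcal S,\delta)$ defines a folding: <ul> <li>with $\delta=(+1,+1)$ if and only if $\gcd(v_{22}-v_{21},\,v_{11}-v_{12})=1$;</li> <li>with $\delta=(+1,-1)$ if and only if $\gcd(v_{22}+v_{21},\,v_{11}+v_{12})=1$;</li> <li>with $\delta=(+1,0)$ if and only if $\gcd(v_{12},v_{22})=1$;</li> <li>with $\delta=(0,+1)$ if and only if $\gcd(v_{11},v_{21})=1$.</li> </ul>
   Context: Let $D\ge 1$. A shape is a finite nonempty set $\mathcal S\subset\mathbb Z^D$ containing the origin; the origin is its distinguished center point. A lattice is a set $\Lambda=\{\sum_{j=1}^D u_jv_j : u_1,\dots,u_D\in\mathbb Z\}$ for linearly independent $v_1,\dots,v_D\in\mathbb Z^D$. The $D\times D$ matrix $G$ whose rows are $v_1,\dots,v_D$ is a generator matrix of $\Lambda$. $\Lambda$ induces a lattice tiling of $\mathcal S$ if the translates $\mathcal S+\lambda$, $\lambda\in\Lambda$, are pairwise disjoint and cover $\mathbb Z^D$. The translate $\mathcal S+\lambda$ is called the copy of $\mathcal S$ with center $\lambda$. For $x\in\mathbb Z^D$, $c(x)$ denotes the unique $\lambda\in\Lambda$ with $x\in\mathcal S+\lambda$. A ternary vector (direction) is a nonzero $\delta\in\{-1,0,+1\}^D$.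 The folded-row of $(\Lambda,\mathcal S,\delta)$ is the sequence $p_0,p_1,p_2,\dots$ defined by $p_0=0$ and $p_{k+1}=(p_k+\delta)-c(p_k+\delta)$. Equivalently, $p_{k+1}=p_k+\delta$ if $p_k+\delta\in\mathcal S$; otherwise $p_{k+1}$ is $p_k+\delta$ minus the center of the copy of $\mathcal S$ containing $p_k+\delta$. The triple $(\Lambda,\mathcal S,\delta)$ defines a folding if every element of $\mathcal S$ occurs in its folded-row. *)

(* Defs.v *)
From Stdlib Require Import ZArith List.
Import ListNotations.
Open Scope Z_scope.

Definition pt := (Z * Z)%type.
Definition padd (x y : pt) : pt := (fst x + fst y, snd x + snd y).
Definition psub (x y : pt) : pt := (fst x - fst y, snd x - snd y).

(* A shape: a finite set of points of Z^2 (given by a list enumerating it)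
   containing the origin (hence nonempty). *)
Definition is_shape (Sh : list pt) : Prop := In (0, 0) Sh.

(* The lattice with generator matrix G = [[v11, v12], [v21, v22]]
   (rows v1 = (v11, v12), v2 = (v21, v22)). *)
Definition in_lattice (v11 v12 v21 v22 : Z) (x : pt) : Prop :=
  exists u1 u2 : Z, x = (u1 * v11 + u2 * v21, u1 * v12 + u2 * v22).

Definition lin_indep (v11 v12 v21 v22 : Z) : Prop :=
  v11 * v22 - v12 * v21 <> 0.

Definition in_copy (Sh : list pt) (lam x : pt) : Prop := In (psub x lam) Sh.

Definition lattice_tiling (v11 v12 v21 v22 : Z) (Sh : list pt) : Prop :=
  (forall lam mu x : pt,
      in_lattice v11 v12 v21 v22 lam -> in_lattice v11 v12 v21 v22 mu ->
      in_copy Sh lam x -> in_copy Sh mu x -> lam = mu) /\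
  (forall x : pt, exists lam : pt,
      in_lattice v11 v12 v21 v22 lam /\ in_copy Sh lam x).

(* p is the folded-row of (Lambda, S, delta): p 0 = 0 and
   p (k+1) = (p k + delta) - c(p k + delta), where c(x) is the (unique under
   tiling) lattice point lam with x in S + lam. *)
Definition is_folded_row (v11 v12 v21 v22 : Z) (Sh : list pt) (delta : pt)
    (p : nat -> pt) : Prop :=
  p O = (0, 0) /\
  forall k : nat, exists lam : pt,
    in_lattice v11 v12 v21 v22 lam /\
    in_copy Sh lam (padd (p k) delta) /\
    p (S k) = psub (padd (p k) delta) lam.

Definition defines_folding (v11 v12 v21 v22 : Z) (Sh : list pt) (delta : pt)
    : Prop :=
  forall p : nat -> pt, is_folded_row v11 v12 v21 v22 Sh delta p ->
  forall s : pt, In s Sh -> exists k : nat, p k = s.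

(* Main.v *)
Require Import Defs.
From Stdlib Require Import ZArith List Lia.
From Stdlib Require Import IndefiniteDescription.
Open Scope Z_scope.

Section L.
Variables v11 v12 v21 v22 : Z.
Local Notation L := (in_lattice v11 v12 v21 v22).

Lemma L_ext x y x' y' : L (x, y) -> x = x' -> y = y' -> L (x', y').
Proof. intros H -> ->; exact H. Qed.

Lemma L_add x1 y1 x2 y2 : L (x1, y1) -> L (x2, y2) -> L (x1 + x2, y1 + y2).
Proof.
  intros [a [b H1]] [c [d H2]]. inversion H1; inversion H2; subst.
  exists (a + c), (b + d). f_equal; ring.
Qed.

Lemma L_opp x y : L (x, y) -> L (- x, - y).
Proof.
  intros [a [b H1]]. inversion H1; subst. exists (- a), (- b). f_equal; ring.
Qed.

Lemma L_D a b : L ((v11 * v22 - v12 * v21) * a, (v11 * v22 - v12 * v21) * b).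
Proof.
  exists (v22 * a - v21 * b), (- v12 * a + v11 * b). f_equal; ring.
Qed.

Lemma L_Dabs a b : L (Z.abs (v11 * v22 - v12 * v21) * a, Z.abs (v11 * v22 - v12 * v21) * b).
Proof.
  destruct (Z.abs_spec (v11 * v22 - v12 * v21)) as [[_ E]|[_ E]]; rewrite E.
  - apply L_D.
  - apply (L_ext _ _ _ _ (L_D (- a) (- b))); ring.
Qed.

Definition G d1 d2 := forall a b, exists n, L (a - n * d1, b - n * d2).

Lemma row_inv S d1 d2 p : is_shape S -> is_folded_row v11 v12 v21 v22 S (d1, d2) p ->
  forall k, In (p k) S /\ L (fst (p k) - Z.of_nat k * d1, snd (p k) - Z.of_nat k * d2).
Proof.
  intros Hs [H0 Hst] k. induction k as [|k [IH1 IH2]].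
  - rewrite H0. split; [exact Hs|]. exists 0, 0. reflexivity.
  - destruct (Hst k) as [[l1 l2] [Hl [Hc Hp]]]. rewrite Hp. split; [exact Hc|].
    replace (Z.of_nat (Datatypes.S k)) with (Z.of_nat k + 1) by lia.
    destruct (p k) as [x y]. simpl in *.
    apply (L_ext _ _ _ _ (L_add _ _ _ _ IH2 (L_opp _ _ Hl))); ring.
Qed.

Lemma foldA S d1 d2 : lin_indep v11 v12 v21 v22 -> is_shape S ->
  lattice_tiling v11 v12 v21 v22 S ->
  (defines_folding v11 v12 v21 v22 S (d1, d2) <-> G d1 d2).
Proof.
  intros Hli Hs [Hdis Hcov]. split.
  - intros Hf a b.
    assert (Hc : {c : pt -> pt | forall x, L (c x) /\ in_copy S (c x) x}).
    { exists (fun x => proj1_sig (constructive_indefinite_description _ (Hcov x))).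
      intro x. apply (proj2_sig (constructive_indefinite_description _ (Hcov x))). }
    destruct Hc as [c Hc].
    pose (p := fix f (k : nat) : pt := match k with O => (0, 0)
                 | S k => psub (padd (f k) (d1, d2)) (c (padd (f k) (d1, d2))) end).
    assert (Hp : is_folded_row v11 v12 v21 v22 S (d1, d2) p).
    { split; [reflexivity|]. intro k. exists (c (padd (p k) (d1, d2))).
      destruct (Hc (padd (p k) (d1, d2))) as [h1 h2]. split; [exact h1|]. split; [exact h2|].
      reflexivity. }
    destruct (Hc (a, b)) as [Hl Hin]. destruct (c (a, b)) as [l1 l2] eqn:El.
    destruct (Hf p Hp _ Hin) as [k Hk].
    destruct (row_inv S d1 d2 p Hs Hp k) as [_ Hk2]. rewrite Hk in Hk2. simpl in Hk2.
    exists (Z.of_nat k).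
    apply (L_ext _ _ _ _ (L_add _ _ _ _ Hl Hk2)); ring.
  - intros HG p Hp [s1 s2] Hin.
    destruct (HG s1 s2) as [n Hn].
    set (D := Z.abs (v11 * v22 - v12 * v21)) in *.
    assert (HD : 0 < D) by (unfold D, lin_indep in *; lia).
    pose proof (Z.mod_pos_bound n D HD) as Hb.
    pose proof (Z.div_mod n D ltac:(lia)) as Hdm.
    exists (Z.to_nat (n mod D)).
    destruct (row_inv S d1 d2 p Hs Hp (Z.to_nat (n mod D))) as [Hk1 Hk2].
    rewrite Z2Nat.id in Hk2 by lia.
    destruct (p (Z.to_nat (n mod D))) as [x y] eqn:Ep. simpl in Hk2.
    assert (HL : L (s1 - x, s2 - y)).
    { pose proof (L_Dabs ((n / D) * d1) ((n / D) * d2)) as H3. fold D in H3.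
      apply (L_ext _ _ _ _ (L_add _ _ _ _ (L_add _ _ _ _ Hn (L_opp _ _ Hk2)) H3));
        clear -Hdm; set (q := n / D) in *; set (r := n mod D) in *; assert (forall a b c : Z, a * (b+c) = a*b+a*c) by (intros; ring);
        clearbody q r; subst n; clearbody D; ring. }
    assert (E : (s1 - x, s2 - y) = (0, 0)).
    { apply (Hdis _ _ (s1, s2) HL).
      - exists 0, 0; reflexivity.
      - unfold in_copy, psub; simpl. replace (s1 - (s1 - x)) with x by ring.
        replace (s2 - (s2 - y)) with y by ring. exact Hk1.
      - unfold in_copy, psub; simpl. rewrite !Z.sub_0_r. exact Hin. }
    inversion E. f_equal; lia.
Qed.

Lemma bez a b : Z.gcd a b = 1 <-> exists u v, u * a + v * b = 1.
Proof.
  split.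
  - intro H. apply Z.gcd_bezout in H. exact H.
  - intro H. apply Z.bezout_1_gcd. exact H.
Qed.

Lemma G10 : G 1 0 <-> Z.gcd v12 v22 = 1.
Proof.
  rewrite bez. split.
  - intro H. destruct (H 0 1) as [n [u1 [u2 E]]]. pose proof (f_equal fst E) as E1; pose proof (f_equal snd E) as E2; cbn [fst snd] in E1, E2.
    exists u1, u2. nia.
  - intros [u1 [u2 E]] a b. exists (a - b * (u1 * v11 + u2 * v21)).
    exists (b * u1), (b * u2). f_equal.
    + ring.
    + rewrite <- (Z.mul_1_r b) at 1. rewrite <- E. ring.
Qed.

Lemma G01 : G 0 1 <-> Z.gcd v11 v21 = 1.
Proof.
  rewrite bez. split.
  - intro H. destruct (H 1 0) as [n [u1 [u2 E]]]. pose proof (f_equal fst E) as E1; pose proof (f_equal snd E) as E2; cbn [fst snd] in E1, E2.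
    exists u1, u2. nia.
  - intros [u1 [u2 E]] a b. exists (b - a * (u1 * v12 + u2 * v22)).
    exists (a * u1), (a * u2). f_equal.
    + rewrite <- (Z.mul_1_r a) at 1. rewrite <- E. ring.
    + ring.
Qed.

Lemma G11 : G 1 1 <-> Z.gcd (v22 - v21) (v11 - v12) = 1.
Proof.
  rewrite bez. split.
  - intro H. destruct (H 1 0) as [n [u1 [u2 E]]]. pose proof (f_equal fst E) as E1; pose proof (f_equal snd E) as E2; cbn [fst snd] in E1, E2.
    exists (- u2), u1. nia.
  - intros [u2 [u1 E]] a b.
    exists (b - ((a - b) * u1 * v12 - (a - b) * u2 * v22)).
    exists ((a - b) * u1), (- ((a - b) * u2)). f_equal.
    + transitivity (b + (a - b) * 1 - (b - ((a - b) * u1 * v12 - (a - b) * u2 * v22))); [ring|].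
      rewrite <- E. ring.
    + ring.
Qed.

Lemma G1m1 : G 1 (-1) <-> Z.gcd (v22 + v21) (v11 + v12) = 1.
Proof.
  rewrite bez. split.
  - intro H. destruct (H 1 0) as [n [u1 [u2 E]]]. pose proof (f_equal fst E) as E1; pose proof (f_equal snd E) as E2; cbn [fst snd] in E1, E2.
    exists u2, u1. nia.
  - intros [u2 [u1 E]] a b.
    exists ((a + b) * (u1 * v12 + u2 * v22) - b).
    exists ((a + b) * u1), ((a + b) * u2). f_equal.
    + transitivity (- b + (a + b) * 1 - ((a + b) * (u1 * v12 + u2 * v22) - b)); [ring|].
      rewrite <- E. ring.
    + ring.
Qed.

End L.

Theorem mainTheorem4 (v11 v12 v21 v22 : Z) (S : list pt) :
  lin_indep v11 v12 v21 v22 ->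
  is_shape S ->
  lattice_tiling v11 v12 v21 v22 S ->
  (defines_folding v11 v12 v21 v22 S (1, 1)
     <-> Z.gcd (v22 - v21) (v11 - v12) = 1) /\
  (defines_folding v11 v12 v21 v22 S (1, -1)
     <-> Z.gcd (v22 + v21) (v11 + v12) = 1) /\
  (defines_folding v11 v12 v21 v22 S (1, 0)
     <-> Z.gcd v12 v22 = 1) /\
  (defines_folding v11 v12 v21 v22 S (0, 1)
     <-> Z.gcd v11 v21 = 1).
Proof.
  intros H1 H2 H3.
  rewrite !(foldA _ _ _ _ S _ _ H1 H2 H3).
  rewrite G11, G1m1, G10, G01. tauto.
Qed.
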